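(* If $\sum_{i=1}^M b_i\ge1$, then for every $\epsilon>0$ the energy-adequate solution $\mathbf r^\star$ is feasible for Problem 1, i.e. $r^\star_l>0$ and $\sigma_l(\mathbf r^\star)\le b_l$ for all $l$.
   Context: Fix an integer $M\ge1$, weights $w_1,\dots,w_M>0$, constants $b_1,\dots,b_M>0$, and $\epsilon>0$. For $\mathbf r\in(0,\infty)^M$ write $S(\mathbf r)=\sum_{i=1}^M r_i$ and define $$\sigma_l(\mathbf r)=\frac{(1-e^{-r_l\epsilon})S(\mathbf r)+r_le^{-r_l\epsilon}}{S(\mathbf r)+1}.$$ Problem 1's constraint set is $\{\mathbf r\in(0,\infty)^M:\sigma_l(\mathbf r)\le b_l\ \forall l\}$. Energy-adequate solution (when $\sum_i b_i\ge1$): let $\beta^\star\in[0,\max_l b_l/\sqrt{w_l}]$ be the root of $\sum_{i=1}^M\min\{b_i,\beta^\star\sqrt{w_i}\}=1$, let $x^\star=-\tfrac12+\sqrt{\tfrac14+\tfrac1\epsilon}$, and set $r^\star_l=\min\{b_l,\beta^\star\sqrt{w_l}\}\,x^\star$. *)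

(* Defs.v *)
(* real analysis (exp, sqrt). Indices l = 0..M-1. *)
From Stdlib Require Import Reals Lra.
Open Scope R_scope.

Fixpoint sumR (M : nat) (f : nat -> R) : R :=
  match M with
  | O => 0
  | S n => sumR n f + f n
  end.

Definition sigma_l (M : nat) (eps : R) (r : nat -> R) (l : nat) : R :=
  ((1 - exp (- (r l * eps))) * sumR M r + r l * exp (- (r l * eps)))
  / (sumR M r + 1).

Definition xstar (eps : R) : R := - / 2 + sqrt (/ 4 + / eps).

Definition rstar (b w : nat -> R) (beta eps : R) (l : nat) : R :=
  Rmin (b l) (beta * sqrt (w l)) * xstar eps.

(* Main.v *)
Require Import Defs.
From Stdlib Require Import Reals Lra Lia.
Open Scope R_scope.

Lemma sumR_ge0 (M : nat) (f : nat -> R) :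
  (forall i, (i < M)%nat -> 0 <= f i) -> 0 <= sumR M f.
Proof.
  induction M; simpl; intros H. lra.
  assert (0 <= f M) by (apply H; lia).
  assert (0 <= sumR M f) by (apply IHM; intros; apply H; lia). lra.
Qed.

Lemma sumR_term (M : nat) (f : nat -> R) :
  (forall i, (i < M)%nat -> 0 <= f i) -> forall l, (l < M)%nat -> f l <= sumR M f.
Proof.
  induction M; simpl; intros H l Hl. lia.
  assert (0 <= f M) by (apply H; lia).
  assert (0 <= sumR M f) by (apply sumR_ge0; intros; apply H; lia).
  destruct (Nat.eq_dec l M) as [->|Hne]. lra.
  assert (f l <= sumR M f) by (apply IHM; [intros; apply H; lia | lia]). lra.
Qed.

Lemma sumR_zero (M : nat) (f : nat -> R) :
  (forall i, (i < M)%nat -> f i = 0) -> sumR M f = 0.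
Proof.
  induction M; simpl; intros H. lra.
  rewrite IHM by (intros; apply H; lia). rewrite H by lia. lra.
Qed.

Theorem lemma1 (M : nat) (w b : nat -> R) (eps beta : R) :
  (1 <= M)%nat ->
  (forall i, (i < M)%nat -> 0 < w i) ->
  (forall i, (i < M)%nat -> 0 < b i) ->
  0 < eps ->
  1 <= sumR M b ->
  (* beta is the root beta* in [0, max_l b_l / sqrt w_l] *)
  0 <= beta ->
  (exists l, (l < M)%nat /\ beta <= b l / sqrt (w l)) ->
  sumR M (fun i => Rmin (b i) (beta * sqrt (w i))) = 1 ->
  forall l, (l < M)%nat ->
    0 < rstar b w beta eps l /\
    sigma_l M eps (rstar b w beta eps) l <= b l.
Proof.
  intros HM Hw Hb He Hsb Hbeta _ Hsum l Hl.
  assert (Hbp : 0 < beta).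
  { destruct (Req_dec beta 0) as [E|E]; [|lra].
    exfalso. rewrite sumR_zero in Hsum. lra.
    intros i Hi. subst beta. rewrite Rmult_0_l.
    apply Rmin_right. left; apply Hb; auto. }
  set (m := fun i => Rmin (b i) (beta * sqrt (w i))).
  assert (Hmp : forall i, (i < M)%nat -> 0 < m i).
  { intros i Hi. unfold m. apply Rmin_glb_lt. apply Hb; auto.
    apply Rmult_lt_0_compat; auto. apply sqrt_lt_R0. apply Hw; auto. }
  assert (Hm1 : m l <= 1).
  { rewrite <- Hsum. apply (sumR_term M m). intros; left; apply Hmp; auto. auto. }
  assert (Hmb : m l <= b l) by (unfold m; apply Rmin_l).
  set (x := xstar eps).
  assert (Hq : 0 < / 4 + / eps) by (assert (0 < / eps) by (apply Rinv_0_lt_compat; lra); lra).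
  assert (Hsq : sqrt (/4 + /eps) * sqrt (/4 + /eps) = /4 + /eps) by (apply sqrt_sqrt; lra).
  assert (Hs0 : 0 <= sqrt (/4 + /eps)) by apply sqrt_pos.
  assert (Hx : x * x + x = / eps) by (unfold x, xstar; nra).
  assert (Hxp : 0 < x).
  { unfold x, xstar. assert (/ 2 < sqrt (/4 + /eps)); [|lra].
    assert (0 < / eps) by (apply Rinv_0_lt_compat; lra). nra. }
  assert (Hx2 : x * x * eps <= 1).
  { assert (x * x * eps + x * eps = 1).
    { replace (x*x*eps + x*eps) with ((x*x+x)*eps) by ring. rewrite Hx. field. lra. }
    nra. }
  assert (HS : sumR M (rstar b w beta eps) = x).
  { transitivity (sumR M m * x).
    - clear -M. induction M; simpl. ring. rewrite IHM. unfold rstar, m, x. ring.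
    - unfold m. rewrite Hsum. ring. }
  assert (Hr : rstar b w beta eps l = m l * x) by reflexivity.
  split. rewrite Hr. apply Rmult_lt_0_compat; auto.
  unfold sigma_l. rewrite HS, Hr.
  set (e := exp (- (m l * x * eps))).
  assert (He1 : 1 - e <= m l * x * eps) by (generalize (exp_ineq1_le (- (m l * x * eps))); unfold e; lra).
  assert (He0 : 0 < e) by apply exp_pos.
  assert (Hml := Hmp l Hl).
  apply Rle_trans with (m l).
  - apply (Rmult_le_reg_r (x + 1)); [lra|].
    unfold Rdiv. rewrite Rmult_assoc, Rinv_l by lra. rewrite Rmult_1_r.
    (* (1-e)x + m x e <= m (x+1)  <=>  x(1-m)(1-e) <= m *)
    assert (H1 : x * (1 - m l) * (1 - e) <= x * (1 - m l) * (m l * x * eps)).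
    { apply Rmult_le_compat_l; [|auto]. apply Rmult_le_pos; lra. }
    assert (H2 : x * (1 - m l) * (m l * x * eps) <= m l).
    { assert (x * (1 - m l) * (m l * x * eps) = m l * (1 - m l) * (x * x * eps)) by ring.
      rewrite H. assert (0 <= 1 - m l) by lra.
      assert (m l * (1 - m l) <= m l) by nra.
      assert (0 <= m l * (1 - m l)) by nra.
      assert (0 <= x*x*eps) by nra. nra. }
    nra.
  - auto.
Qed.
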